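(* Let $(X_1,\dots,X_d)$, $d\ge 3$, be a binary random vector following a determinantal point process with correlation kernel $K$, where $K$ is a real symmetric $d\times d$ matrix with all eigenvalues strictly in $(0,1)$, all entries of $K$ are nonzero, and $K_{1i}>0$ for all $i=2,\dots,d$. Then: (i) $K_{ii}=\mathbb{P}[X_i=1]=\mathbb{E}[X_i]$ for all $i=1,\dots,d$; (ii) for all $i<j$, $-\mathrm{Cov}(X_i,X_j)>0$ and $|K_{ij}|=\sqrt{K_{ii}K_{jj}-\mathbb{P}[X_i=X_j=1]}=\sqrt{-\mathrm{Cov}(X_i,X_j)}$; (iii) for all $1<i<j\le d$, $$\mathrm{sgn}(K_{ij})=\mathrm{sgn}\Big(\mathbb{P}[X_1=1,X_i=1,X_j=1]-K_{11}K_{ii}K_{jj}+K_{11}K_{ij}^2+K_{ii}K_{1j}^2+K_{jj}K_{1i}^2\Big),$$ and this sign is $\pm1$ (never $0$). Consequently every entry of $K$ is uniquely determined by the marginal, pairwise, and threewise probabilities $\mathbb{P}[X_i=1]$, $\mathbb{P}[X_i=X_j=1]$, $\mathbb{P}[X_1=X_i=X_j=1]$.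
   Context: A binary random vector $(X_1,\dots,X_d)$ follows a determinantal point process (DPP) with correlation kernel $K$ if, writing $S=\{j: X_j=1\}$, one has $\mathbb{P}[s\subseteq S]=\mathbb{P}[X_j=1\ \forall j\in s]=\det K_s$ for all $s\subseteq\{1,\dots,d\}$, where $K_s=[K_{ij}]_{i,j\in s}$ is the principal submatrix indexed by $s$. Here $\mathrm{sgn}(x)=1$ if $x>0$, $-1$ if $x<0$, $0$ if $x=0$. *)

(* Defs.v *)
From HB Require Import structures.
From mathcomp Require Import all_boot all_order all_algebra.
Set Implicit Arguments. Unset Strict Implicit. Unset Printing Implicit Defensive.
Import Order.TTheory GRing.Theory Num.Theory.
Local Open Scope ring_scope.

(* Indices {1,...,d} are 'I_d (index 1 of the paper = ordinal with value 0).
   A random subset S of 'I_d is given by its law P : {ffun {set 'I_d} -> R};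
   X_j = 1 iff j \in S. *)

Definition principal_minor (R : comRingType) (d : nat) (K : 'M[R]_d)
  (s : {set 'I_d}) : R :=
  \det (\matrix_(a < #|s|, b < #|s|) K (enum_val a) (enum_val b)).

Definition is_distribution (R : numDomainType) (d : nat)
  (P : {ffun {set 'I_d} -> R}) : Prop :=
  (forall S, 0 <= P S) /\ \sum_(S : {set 'I_d}) P S = 1.

Definition prob (R : numDomainType) (d : nat) (P : {ffun {set 'I_d} -> R})
  (E : pred {set 'I_d}) : R := \sum_(S : {set 'I_d} | E S) P S.

Definition Xv (R : numDomainType) (d : nat) (i : 'I_d) (S : {set 'I_d}) : R :=
  (i \in S)%:R.

Definition expect (R : numDomainType) (d : nat) (P : {ffun {set 'I_d} -> R})
  (f : {set 'I_d} -> R) : R := \sum_(S : {set 'I_d}) P S * f S.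

Definition cov (R : numDomainType) (d : nat) (P : {ffun {set 'I_d} -> R})
  (i j : 'I_d) : R :=
  expect P (fun S => Xv R i S * Xv R j S)
  - expect P (Xv R i) * expect P (Xv R j).

Definition is_DPP (R : numDomainType) (d : nat) (K : 'M[R]_d)
  (P : {ffun {set 'I_d} -> R}) : Prop :=
  is_distribution P /\
  forall s : {set 'I_d}, prob P (fun S => s \subset S) = principal_minor K s.

Definition kernel_hyp (R : rcfType) (d : nat) (K : 'M[R]_d) : Prop :=
  [/\ K^T = K,
      (forall a : R, eigenvalue K a -> 0 < a < 1),
      (forall i j, K i j != 0) &
      (forall k i : 'I_d, val k = 0%N -> val i != 0%N -> 0 < K k i)].

(* Main.v *)
Require Import Defs.
From HB Require Import structures.
From mathcomp Require Import all_boot all_order all_algebra.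
From mathcomp Require Import ring.
Set Implicit Arguments. Unset Strict Implicit. Unset Printing Implicit Defensive.
Import Order.TTheory GRing.Theory Num.Theory.
Local Open Scope ring_scope.

Lemma det2 (R : comRingType) (A : 'M[R]_2) :
  \det A = A 0 0 * A 1 1 - A 0 1 * A 1 0.
Proof.
rewrite (expand_det_row _ ord0) !big_ord_recr big_ord0 /= /cofactor !det_mx11 !mxE /=.
rewrite add0r !expr0 !expr1 mul1r mulN1r mulrN.
by congr (A _ _ * A _ _ - A _ _ * A _ _); apply/val_inj.
Qed.

Lemma det3 (R : comRingType) (A : 'M[R]_3) :
  \det A = A 0 0 * (A 1 1 * A 2 2 - A 1 2 * A 2 1)
         - A 0 1 * (A 1 0 * A 2 2 - A 1 2 * A 2 0)
         + A 0 2 * (A 1 0 * A 2 1 - A 1 1 * A 2 0).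
Proof.
rewrite (expand_det_row _ ord0) !big_ord_recr big_ord0 /= /cofactor !det2 !mxE /=.
rewrite add0r !expr0 !expr1 mul1r mulN1r mulrN.
rewrite add0n expr2 mulN1r opprK mul1r.
by congr (A _ _ * (A _ _ * A _ _ - A _ _ * A _ _) - A _ _ * (A _ _ * A _ _ - A _ _ * A _ _) + A _ _ * (A _ _ * A _ _ - A _ _ * A _ _)); apply/val_inj.
Qed.

Lemma det_cast (R : comRingType) n m (e : n = m) (F : 'I_n -> 'I_n -> R) :
  \det (\matrix_(a < n, b < n) F a b)
  = \det (\matrix_(a < m, b < m) F (cast_ord (esym e) a) (cast_ord (esym e) b)).
Proof.
case: m / e; congr (\det _); apply/matrixP => a b; rewrite !mxE.
by congr (F _ _); apply/val_inj.
Qed.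

Lemma pm_nth (R : comRingType) d (K : 'M[R]_d) (s : {set 'I_d}) m
  (e : #|s| = m) (i0 : 'I_d) :
  principal_minor K s
  = \det (\matrix_(a < m, b < m) K (nth i0 (enum s) a) (nth i0 (enum s) b)).
Proof.
rewrite /principal_minor (det_cast e); congr (\det _); apply/matrixP => a b.
by rewrite !mxE !(enum_val_nth i0).
Qed.

Lemma enum_sorted d (s : {set 'I_d}) :
  sorted (fun x y : 'I_d => (x < y)%N) (enum s).
Proof.
have -> : enum s = [seq x <- enum 'I_d | x \in s] by rewrite enumT.
apply: (subseq_sorted _ (filter_subseq _ _)).
  by move=> x y z; apply: ltn_trans.
have := iota_ltn_sorted 0 d; rewrite -val_enum_ord sorted_map.
by [].
Qed.

Lemma enum_eq d (s : {set 'I_d}) (t : seq 'I_d) :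
  sorted (fun x y : 'I_d => (x < y)%N) t -> (forall x, (x \in s) = (x \in t)) ->
  enum s = t.
Proof.
move=> st hs; apply: (irr_sorted_eq (leT := fun x y : 'I_d => (x < y)%N)).
- by move=> x y z; apply: ltn_trans.
- by move=> x; rewrite /= ltnn.
- exact: enum_sorted.
- exact: st.
- by move=> x; rewrite mem_enum hs.
Qed.

Lemma pm1 (R : comRingType) d (K : 'M[R]_d) (i : 'I_d) :
  principal_minor K [set i] = K i i.
Proof.
rewrite (pm_nth K (cards1 i) i) enum_set1 det_mx11 mxE /=.
by [].
Qed.

Lemma pm2 (R : comRingType) d (K : 'M[R]_d) (i j : 'I_d) : (i < j)%N ->
  principal_minor K [set i; j] = K i i * K j j - K i j * K j i.
Proof.
move=> lij.
have ne : i != j by apply/eqP => h; rewrite h ltnn in lij.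
have he : enum [set i; j] = [:: i; j].
  by apply: enum_eq; [rewrite /= lij | move=> x; rewrite !inE].
have c : #|[set i; j]| = 2%N by rewrite cardE he.
by rewrite (pm_nth K c i) he det2 !mxE.
Qed.

Lemma pm3 (R : comRingType) d (K : 'M[R]_d) (k i j : 'I_d) :
  (k < i)%N -> (i < j)%N ->
  principal_minor K [set k; i; j] =
    K k k * (K i i * K j j - K i j * K j i)
  - K k i * (K i k * K j j - K i j * K j k)
  + K k j * (K i k * K j i - K i i * K j k).
Proof.
move=> lki lij.
have he : enum [set k; i; j] = [:: k; i; j].
  by apply: enum_eq; [rewrite /= lki lij | move=> x; rewrite !inE orbA].
have c : #|[set k; i; j]| = 3%N by rewrite cardE he.
by rewrite (pm_nth K c i) he det3 !mxE.
Qed.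

Lemma prob_ext (R : numDomainType) d (P : {ffun {set 'I_d} -> R}) (E1 E2 : pred {set 'I_d}) :
  E1 =1 E2 -> prob P E1 = prob P E2.
Proof. by move=> h; rewrite /prob; apply: eq_bigl. Qed.

Lemma expect_ind (R : numDomainType) d (P : {ffun {set 'I_d} -> R}) (E : pred {set 'I_d}) :
  expect P (fun S => (E S)%:R) = prob P E.
Proof.
rewrite /expect /prob [RHS]big_mkcond; apply: eq_bigr => S _.
by case: (E S); rewrite ?mulr1 ?mulr0.
Qed.

Section Facts.
Variables (R : rcfType) (d : nat) (K : 'M[R]_d) (P : {ffun {set 'I_d} -> R}).
Hypothesis hK : kernel_hyp K.
Hypothesis hP : is_DPP K P.

Lemma symK (i j : 'I_d) : K j i = K i j.
Proof. by case: hK => hT _ _ _; rewrite -{1}hT mxE. Qed.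

Lemma prob1 (i : 'I_d) : prob P (fun S => i \in S) = K i i.
Proof.
case: hP => _ h; rewrite -pm1 -h; apply: prob_ext => S.
by rewrite sub1set.
Qed.

Lemma prob2 (i j : 'I_d) : (i < j)%N ->
  prob P (fun S => (i \in S) && (j \in S)) = K i i * K j j - K i j ^+ 2.
Proof.
move=> lij; case: hP => _ h.
have -> : prob P (fun S => (i \in S) && (j \in S)) = principal_minor K [set i; j].
  by rewrite -h; apply: prob_ext => S; rewrite subUset !sub1set.
by rewrite pm2 // symK expr2.
Qed.

Lemma prob3 (k i j : 'I_d) : (k < i)%N -> (i < j)%N ->
  prob P (fun S => [&& k \in S, i \in S & j \in S]) =
   K k k * K i i * K j j + 2 * K k i * K i j * K k j
   - K k k * K i j ^+ 2 - K i i * K k j ^+ 2 - K j j * K k i ^+ 2.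
Proof.
move=> lki lij; case: hP => _ h.
have -> : prob P (fun S => [&& k \in S, i \in S & j \in S]) =
          principal_minor K [set k; i; j].
  by rewrite -h; apply: prob_ext => S; rewrite !subUset !sub1set andbA.
rewrite pm3 // (symK k i) (symK k j) (symK i j); ring.
Qed.

Lemma cov_eq (i j : 'I_d) : (i < j)%N -> - cov P i j = K i j ^+ 2.
Proof.
move=> lij; rewrite /cov.
have -> : expect P (fun S => Xv R i S * Xv R j S) =
          expect P (fun S => ((i \in S) && (j \in S))%:R).
  by apply: eq_bigr => S _; rewrite /Xv; case: (i \in S); case: (j \in S);
     rewrite ?mulr1 ?mulr0.
rewrite expect_ind !(expect_ind P (fun S => _ \in S)) prob2 // !prob1.
ring.
Qed.

End Facts.

Theorem proposition3 (R : rcfType) (d : nat) (hd : (3 <= d)%N)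
  (K : 'M[R]_d) (P : {ffun {set 'I_d} -> R}) :
  kernel_hyp K -> is_DPP K P ->
  (* (i) *)
  (forall i : 'I_d,
     K i i = prob P (fun S => i \in S) /\
     prob P (fun S => i \in S) = expect P (Xv R i)) /\
  (* (ii) *)
  (forall i j : 'I_d, (i < j)%N ->
     0 < - cov P i j /\
     `|K i j| = Num.sqrt (K i i * K j j - prob P (fun S => (i \in S) && (j \in S))) /\
     Num.sqrt (K i i * K j j - prob P (fun S => (i \in S) && (j \in S)))
       = Num.sqrt (- cov P i j)) /\
  (* (iii) ; k is the index 1 of the paper *)
  (forall k i j : 'I_d, val k = 0%N -> (0 < i)%N -> (i < j)%N ->
     Num.sg (K i j) =
       Num.sg (prob P (fun S => [&& k \in S, i \in S & j \in S])
               - K k k * K i i * K j j + K k k * K i j ^+ 2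
               + K i i * K k j ^+ 2 + K j j * K k i ^+ 2) /\
     (Num.sg (K i j) = 1 \/ Num.sg (K i j) = -1)) /\
  (* consequence: K is determined by marginal, pairwise and threewise
     probabilities among all kernels satisfying the same hypotheses *)
  (forall (K' : 'M[R]_d) (P' : {ffun {set 'I_d} -> R}),
     kernel_hyp K' -> is_DPP K' P' ->
     (forall i : 'I_d, prob P' (fun S => i \in S) = prob P (fun S => i \in S)) ->
     (forall i j : 'I_d,
        prob P' (fun S => (i \in S) && (j \in S))
        = prob P (fun S => (i \in S) && (j \in S))) ->
     (forall k i j : 'I_d, val k = 0%N ->
        prob P' (fun S => [&& k \in S, i \in S & j \in S])
        = prob P (fun S => [&& k \in S, i \in S & j \in S])) ->
     K' = K).
Proof.
move=> hK hP.
have hK' := hK; case: hK' => _ _ nz pos.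
have sq0 : forall x : R, x != 0 -> 0 < x ^+ 2.
  by move=> x hx; rewrite lt0r sqr_ge0 andbT sqrf_eq0.
split.
  move=> i; rewrite (prob1 hP); split => //.
  by rewrite /Xv expect_ind (prob1 hP).
split.
  move=> i j lij; rewrite (cov_eq hK hP) // (prob2 hK hP) //.
  rewrite (_ : K i i * K j j - (K i i * K j j - K i j ^+ 2) = K i j ^+ 2);
    last by ring.
  by rewrite sqrtr_sqr; split => //; apply: sq0.
split.
  move=> k i j k0 i0 lij.
  have lki : (k < i)%N by rewrite k0.
  have pki : 0 < K k i by apply: pos => //; rewrite -lt0n.
  have pkj : 0 < K k j.
    by apply: pos => //; rewrite -lt0n; apply: ltn_trans lij.
  rewrite (prob3 hK hP) //.
  rewrite (_ : _ - _ + _ + _ + _ = K i j * (2 * K k i * K k j)); last by ring.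
  rewrite sgrM (gtr0_sg (x := 2 * K k i * K k j)) ?mulr1; last first.
    by rewrite !pmulr_rgt0 // ?ltr0n // mulr_gt0.
  split => //.
  have [h|h|h] := ltrgt0P (K i j);
    first [by left; rewrite gtr0_sg | by right; rewrite ltr0_sg
          | by move: (nz i j); rewrite h eqxx | by move: (nz i j); rewrite -h eqxx].
move=> K' P' hK2 hP2 e1 e2 e3.
have [_ _ nz' pos'] := hK2.
have diag : forall i : 'I_d, K' i i = K i i.
  by move=> i; rewrite -(prob1 hP) -(prob1 hP2) e1.
have sqeq : forall i j : 'I_d, (i < j)%N -> K' i j ^+ 2 = K i j ^+ 2.
  move=> i j lij; have := e2 i j; rewrite (prob2 hK hP) // (prob2 hK2 hP2) // !diag.
  by move/eqP; rewrite (inj_eq (addrI _)) eqr_opp => /eqP.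
have poscase : forall i j : 'I_d, val i = 0%N -> (i < j)%N -> K' i j = K i j.
  move=> i j i0 lij.
  have j0 : val j != 0%N by rewrite -lt0n -i0.
  have a := pos' i j i0 j0; have b := pos i j i0 j0.
  by rewrite -(gtr0_norm a) -(gtr0_norm b) -!sqrtr_sqr sqeq.
have main : forall i j : 'I_d, (i < j)%N -> K' i j = K i j.
  move=> i j lij; have [i0|ipos] := posnP i; first exact: poscase.
  have d0 : (0 < d)%N by apply: leq_trans hd.
  pose k : 'I_d := Ordinal d0.
  have lki : (k < i)%N by [].
  have lkj : (k < j)%N by apply: ltn_trans lij.
  have := e3 k i j erefl; rewrite (prob3 hK hP) // (prob3 hK2 hP2) // !diag.
  rewrite (poscase k i) // (poscase k j) // (sqeq i j) // => /eqP.
  rewrite -subr_eq0 => /eqP E.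
  have : (K' i j - K i j) * (2 * K k i * K k j) = 0 by rewrite -E; ring.
  move/eqP; rewrite mulf_eq0 => /orP [|]; first by rewrite subr_eq0 => /eqP.
  have pki : 0 < K k i by apply: pos => //; rewrite -lt0n.
  have pkj : 0 < K k j by apply: pos => //; rewrite -lt0n.
  by rewrite gt_eqF // !pmulr_rgt0 // ?ltr0n // mulr_gt0.
apply/matrixP => i j.
have [lij|lji|eij] := ltngtP i j.
- exact: main.
- by rewrite (symK hK2) (symK hK) main.
- by rewrite (val_inj eij) diag.
Qed.
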